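(* Under the standing setup, let $Y_1,Y_2$ be two nonnegative measurable income functions with $Y_1\le Y_2$ pointwise (so the income processes satisfy $Y_{1t}\le Y_{2t}$ for all $t$), and suppose Assumptions 1 and 2 hold for each of them. Let $c_1^*,c_2^*$ be the corresponding optimal consumption functions. Then $c_1^*(w,z)\le c_2^*(w,z)$ for all $(w,z)\in S_0$.
   Context: Standing setup. $\mathsf Z$ finite, $\{Z_t\}$ a time-homogeneous Markov chain on $\mathsf Z$ with transition probabilities $P(z,\hat z)$; $\{\epsilon_t\}_{t\ge1}$ i.i.d. with distribution $\pi$, independent of $\{Z_t\}$; for nonnegative measurable $\beta,R,Y$, $\beta_t=\beta(Z_{t-1},Z_t,\epsilon_t)$, $R_t=R(Z_{t-1},Z_t,\epsilon_t)$, $Y_t=Y(Z_{t-1},Z_t,\epsilon_t)$. $u:(0,\infty)\times\mathsf Z\to\mathbb R$ with derivative $u'(c,z)$ in $c$. $\mathbb E_z$: expectation given $Z_0=z$; under $\mathbb E_z$, $\hat Z=Z_1$, $\hat\beta=\beta(z,\hat Z,\epsilon_1)$, $\hat R=R(z,\hat Z,\epsilon_1)$, $\hat Y=Y(z,\hat Z,\epsilon_1)$. $S_0=(0,\infty)\times\mathsf Z$. Assumption 1: for every $z$, $u(\cdot,z)$ twice differentiable on $(0,\infty)$, $u'>0$, $u''<0$, $u'(c,z)\to\infty$ as $c\to0$, $\lim_{c\to\infty}u'(c,z)<1$. Assumption 2: (a) $\mathbb E_zu'(\hat Y,\hat Z)<\infty$ and $\mathbb E_z\hat\beta\hat Ru'(\hat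 Y,\hat Z)<\infty$ for all $z$; (b) $r(K(1))<1$ ($r$ = spectral radius), where $K_{z\hat z}(\theta)=P(z,\hat z)\int\beta(z,\hat z,\epsilon)R(z,\hat z,\epsilon)^\theta\pi(d\epsilon)$. $\mathcal C$: continuous $c:S_0\to\mathbb R_+$, increasing in $w$, $0<c(w,z)\le w$, with $\sup_{S_0}|u'(c(w,z),z)-u'(w,z)|<\infty$. $T$: $Tc(w,z)$ is the unique $\xi\in(0,w]$ with $u'(\xi,z)=\max\{\mathbb E_z\hat\beta\hat Ru'(c(\hat R(w-\xi)+\hat Y,\hat Z),\hat Z),u'(w,z)\}$. The optimal consumption function $c^*$ is the unique fixed point of $T$ in $\mathcal C$ (for the given income process). *)

(* Defs.v *)
From HB Require Import structures.
From mathcomp Require Import all_boot all_order all_algebra.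
From mathcomp Require Import complex.
From mathcomp Require Import all_classical all_reals all_analysis.

Set Implicit Arguments.
Unset Strict Implicit.
Unset Printing Implicit Defensive.

Import Order.TTheory GRing.Theory Num.Theory.
Import numFieldNormedType.Exports.
Local Open Scope classical_set_scope.
Local Open Scope ring_scope.

Section Defs.
Variable R : realType.

Definition spectral_radius (n : nat) (A : 'M[R]_n) : R :=
  sup [set complex.Re `|l| | l in
        [set l : R[i] | eigenvalue (map_mx (real_complex R) A) l]].

Variable Z : finType.

Definition stochastic (P : Z -> Z -> R) : Prop :=
  (forall z zh, 0 <= P z zh) /\ (forall z, \sum_(zh : Z) P z zh = 1).

Definition up (u : R -> Z -> R) (c : R) (z : Z) : R :=
  derive1 (fun x => u x z) c.

Definition upp (u : R -> Z -> R) (c : R) (z : Z) : R :=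
  derive1 (fun x => up u x z) c.

Definition upE (u : R -> Z -> R) (c : R) (z : Z) : \bar R :=
  if 0 < c then (up u c z)%:E else +oo%E.

Variables (d : measure_display) (E : measurableType d).

(* E_z f(Zhat, eps_1) = sum_zh P(z,zh) \int f(zh, eps) pi(d eps) *)
Definition Ez (P : Z -> Z -> R) (pi : probability E R) (z : Z)
  (f : Z -> E -> \bar R) : \bar R :=
  (\sum_(zh : Z) (P z zh)%:E * \int[pi]_e f zh e)%E.

Definition Assumption1 (u : R -> Z -> R) : Prop :=
  forall z,
    (forall c, 0 < c -> derivable (fun x => u x z) c 1 /\
                        derivable (fun x => up u x z) c 1) /\
    (forall c, 0 < c -> 0 < up u c z) /\
    (forall c, 0 < c -> upp u c z < 0) /\
    ((fun c => up u c z) @ 0^'+ --> +oo) /\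
    (exists L : R, L < 1 /\ (fun c => up u c z) @ +oo --> L).

Definition K1E (P : Z -> Z -> R) (pi : probability E R)
  (beta Rr : Z -> Z -> E -> R) (z zh : Z) : \bar R :=
  ((P z zh)%:E * \int[pi]_e (beta z zh e * Rr z zh e)%:E)%E.

Definition K1 (P : Z -> Z -> R) (pi : probability E R)
  (beta Rr : Z -> Z -> E -> R) : 'M[R]_#|Z| :=
  \matrix_(i, j) fine (K1E P pi beta Rr (enum_val i) (enum_val j)).

Definition Assumption2 (P : Z -> Z -> R) (pi : probability E R)
  (beta Rr Y : Z -> Z -> E -> R) (u : R -> Z -> R) : Prop :=
  (forall z, (Ez P pi z (fun zh e => upE u (Y z zh e) zh) < +oo)%E) /\
  (forall z, (Ez P pi z (fun zh e =>
       (beta z zh e * Rr z zh e)%:E * upE u (Y z zh e) zh) < +oo)%E) /\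
  (forall z zh, (K1E P pi beta Rr z zh < +oo)%E) /\
  spectral_radius (K1 P pi beta Rr) < 1.

Definition inC (u : R -> Z -> R) (c : R -> Z -> R) : Prop :=
  (forall z, {within [set w : R | 0 < w], continuous (fun w => c w z)}) /\
  (forall z w1 w2, 0 < w1 -> w1 <= w2 -> c w1 z <= c w2 z) /\
  (forall z w, 0 < w -> 0 < c w z <= w) /\
  (exists M : R, forall z w, 0 < w -> `|up u (c w z) z - up u w z| <= M).

(* T_rel c w z xi : xi in (0,w] solves
   u'(xi,z) = max { E_z beta R u'(c(R(w-xi)+Y, Zhat), Zhat), u'(w,z) },
   i.e. xi = Tc(w,z). *)
Definition T_rel (P : Z -> Z -> R) (pi : probability E R)
  (beta Rr Y : Z -> Z -> E -> R) (u : R -> Z -> R) (c : R -> Z -> R)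
  (w : R) (z : Z) (xi : R) : Prop :=
  0 < xi <= w /\
  (up u xi z)%:E =
    maxe (Ez P pi z (fun zh e =>
            let a := Rr z zh e * (w - xi) + Y z zh e in
            ((beta z zh e * Rr z zh e)%:E *
             (if (0 < a)%R then upE u (c a zh) zh else +oo))%E))
         (up u w z)%:E.

Definition T_fixed (P : Z -> Z -> R) (pi : probability E R)
  (beta Rr Y : Z -> Z -> E -> R) (u : R -> Z -> R) (c : R -> Z -> R) : Prop :=
  forall w z, 0 < w -> T_rel P pi beta Rr Y u c w z (c w z).

Definition optimal_consumption (P : Z -> Z -> R) (pi : probability E R)
  (beta Rr Y : Z -> Z -> E -> R) (u : R -> Z -> R) (c : R -> Z -> R) : Prop :=
  inC u c /\ T_fixed P pi beta Rr Y u c.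

Definition nonneg_meas (f : Z -> Z -> E -> R) : Prop :=
  forall z zh, measurable_fun setT (f z zh) /\ (forall e, 0 <= f z zh e).

End Defs.

(* Main.v *)
Require Import Defs.
From HB Require Import structures.
From mathcomp Require Import all_boot all_order all_algebra.
From mathcomp Require Import complex.
From mathcomp Require Import all_classical all_reals all_analysis.
From mathcomp Require Import ring lra.
From mathcomp Require Import measurable_realfun.
Import Order.TTheory GRing.Theory Num.Theory.
Import numFieldNormedType.Exports.
Local Open Scope classical_set_scope.
Local Open Scope ring_scope.

Section LA.
Variable R : realType.

Definition Qp n (K : 'M[R]_n) (t : R) := forall y : 'cV[R]_n,
  (forall i, 0 <= ((t%:M - K) *m y) i 0) -> forall i, 0 <= y i 0.
Arguments Qp {n}.

Lemma tK_E n (K : 'M[R]_n) t (y : 'cV[R]_n) i :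
  ((t%:M - K) *m y) i 0 = t * y i 0 - (K *m y) i 0.
Proof. by rewrite mulmxBl mul_scalar_mx !mxE. Qed.

Lemma argmin_neg n (y : 'cV[R]_n) :
  (exists i, y i 0 < 0) -> exists i0, y i0 0 < 0 /\ forall j, y i0 0 <= y j 0.
Proof.
move=> [i yi].
case: (@arg_minP _ _ _ i predT (fun j => y j 0)) => // i0 _ Hm.
exists i0; split; last by move=> j; exact: Hm.
by rewrite (le_lt_trans (Hm i isT)).
Qed.

Lemma Q_large n (K : 'M[R]_n) t : (forall i j, 0 <= K i j) ->
  (forall i : 'I_n, (\sum_(j < n) K i j)%R < t) -> Qp K t.
Proof.
move=> K0 Ht y Hy i; rewrite leNgt; apply/negP => yi.
have [i0 [y0 Hm]] := @argmin_neg n y (ex_intro _ i yi).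
have := Hy i0; rewrite tK_E mxE subr_ge0 => H.
have H2 : (\sum_(j < n) K i0 j) * y i0 0 <= \sum_(j < n) K i0 j * y j 0.
  by rewrite mulr_suml; apply: ler_sum => j _; rewrite ler_wpM2l.
have := le_trans H2 H; rewrite -subr_ge0 -mulrBl.
by rewrite pmulr_rge0 ?subr_gt0 ?Ht // leNgt y0.
Qed.
Lemma Q_step n (K : 'M[R]_n) t h : Qp K t -> (t%:M - K) \in unitmx -> 0 <= h ->
  (forall i, h * (\sum_(j < n) (invmx (t%:M - K)) i j) < 1) -> Qp K (t - h).
Proof.
move=> Qt Au h0 Hh y Hy.
set A := t%:M - K in Au Hh *. set B := invmx A in Hh *.
have B0 : forall i j, 0 <= B i j.
  move=> i j; have : forall k : 'I_n, 0 <= (A *m (B *m (delta_mx j 0 : 'cV_n))) k 0.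
    by move=> k; rewrite mulmxA mulmxV // mul1mx mxE; case: (_ && _).
  by move/Qt => /(_ i); rewrite -colE mxE.
set x := ((t - h)%:M - K) *m y in Hy.
have Ay : A *m y = x + h *: y.
  have -> : A = ((t - h)%:M - K) + h%:M.
    apply/matrixP => a b; rewrite !mxE; case: (a == b) => /=;
    rewrite ?mulr1n ?mulr0n; lra.
  by rewrite mulmxDl mul_scalar_mx.
have Hy' : y = B *m x + h *: (B *m y).
  by rewrite scalemxAr -mulmxDr -Ay mulmxA mulVmx // mul1mx.
have Bx0 : forall i, 0 <= (B *m x) i 0.
  by apply: Qt => k; rewrite mulmxA mulmxV // mul1mx; apply: Hy.
move=> i; rewrite leNgt; apply/negP => yi.
have [i0 [y0 Hm]] := @argmin_neg n y (ex_intro _ i yi).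
have E : y i0 0 = (B *m x) i0 0 + h * \sum_(j < n) B i0 j * y j 0.
  by rewrite {1}Hy' !mxE.
have H2 : (\sum_(j < n) B i0 j) * y i0 0 <= \sum_(j < n) B i0 j * y j 0.
  by rewrite mulr_suml; apply: ler_sum => j _; rewrite ler_wpM2l.
have H3 : h * ((\sum_(j < n) B i0 j) * y i0 0) <= y i0 0.
  by rewrite [X in _ <= X]E -[X in X <= _]add0r lerD // ler_wpM2l.
move: H3; rewrite mulrA -subr_ge0 -[X in X - _]mul1r -mulrBl.
by rewrite pmulr_rge0 ?subr_gt0 ?Hh // leNgt y0.
Qed.
Lemma eval_cpmx n (K : 'M[R]_n) t :
  map_mx (horner_eval t) (char_poly_mx K) = t%:M - K.
Proof.
apply/matrixP => i j; rewrite !mxE /=.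
by rewrite horner_evalE hornerD hornerN hornerMn hornerX hornerC.
Qed.

Lemma char_eval n (K : 'M[R]_n) t : (char_poly K).[t] = \det (t%:M - K).
Proof. by rewrite -eval_cpmx det_map_mx ?horner_evalE. Qed.

Lemma adj_eval n (K : 'M[R]_n) t i j :
  \adj (t%:M - K) i j = (\adj (char_poly_mx K) i j).[t].
Proof. by rewrite -eval_cpmx -map_mx_adj mxE ?horner_evalE. Qed.

Lemma poly_ub (p : {poly R}) (a b : R) : exists C, forall t, a <= t <= b -> `|p.[t]| <= C.
Proof.
case: (leP a b) => ab; last first.
  by exists 0 => t /andP[ha hb]; have := le_trans ha hb; rewrite leNgt ab.
have cf : {within `[a, b], continuous (fun x : R => (`|p.[x]| : R))}.
  apply: continuous_subspaceT => x.
  apply: continuous_comp; [exact: continuous_horner | exact: norm_continuous].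
have [c _ Hc] := EVT_max ab cf.
by exists `|p.[c]| => t Ht; apply: (Hc t); rewrite in_itv.
Qed.

Lemma poly_lb (p : {poly R}) (a b : R) : a <= b ->
  (forall t, a <= t <= b -> p.[t] != 0) ->
  exists2 d, 0 < d & forall t, a <= t <= b -> d <= `|p.[t]|.
Proof.
move=> ab Hp.
have cf : {within `[a, b], continuous (fun x : R => (`|p.[x]| : R))}.
  apply: continuous_subspaceT => x.
  apply: continuous_comp; [exact: continuous_horner | exact: norm_continuous].
have [c Hc1 Hc] := EVT_min ab cf.
exists `|p.[c]|; first by rewrite normr_gt0 Hp // -in_itv.
by move=> t Ht; apply: (Hc t); rewrite in_itv.
Qed.
Lemma LA_key n (K : 'M[R]_n) : (forall i j, 0 <= K i j) ->
  (forall t, 1 <= t -> ~~ root (char_poly K) t) -> Qp K 1.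
Proof.
move=> K0 Hroot.
set S := \sum_(i < n) \sum_(j < n) K i j.
have rowS : forall i, \sum_(j < n) K i j <= S.
  move=> i; rewrite /S [leRHS](bigD1 i) //= lerDl sumr_ge0 // => i' _.
  by rewrite sumr_ge0.
have S0 : 0 <= S by rewrite sumr_ge0 // => i _; rewrite sumr_ge0.
set t0 := S + 2.
have Qt0 : Qp K t0.
  by apply: Q_large => // i; rewrite (le_lt_trans (rowS i)) // /t0; lra.
have t01 : 1 <= t0 by rewrite /t0; lra.
have [dl dl0 Hdl] := @poly_lb (char_poly K) 1 t0 t01
  (fun t Ht => Hroot t (proj1 (andP Ht))).
have : forall ij : 'I_n * 'I_n, exists C, forall t, 1 <= t <= t0 ->
   `|(\adj (char_poly_mx K) ij.1 ij.2).[t]| <= C by move=> ij; exact: poly_ub.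
move=> /fin_all_exists [Cf HCf].
set Ca := \sum_(ij : 'I_n * 'I_n) `|Cf ij|.
have HCa : forall i j t, 1 <= t <= t0 -> `|\adj (t%:M - K) i j| <= Ca.
  move=> i j t Ht; rewrite adj_eval (le_trans (HCf (i, j) t Ht)) //.
  rewrite (le_trans (ler_norm _)) // /Ca (bigD1 (i, j)) //= lerDl.
  by rewrite sumr_ge0.
have Ca0 : 0 <= Ca by rewrite sumr_ge0.
set Bnd := n%:R * (Ca / dl).
have Bnd0 : 0 <= Bnd by rewrite mulr_ge0 ?divr_ge0 // ltW.
have unitt : forall t, 1 <= t <= t0 -> (t%:M - K) \in unitmx.
  move=> t /andP[t1 _]; rewrite unitmxE unitfE -char_eval; exact: Hroot.
have rowB : forall t, 1 <= t <= t0 -> forall i,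
    \sum_(j < n) invmx (t%:M - K) i j <= Bnd.
  move=> t Ht i; rewrite /invmx unitt //.
  have -> : Bnd = \sum_(j < n) (Ca / dl) by rewrite sumr_const card_ord /Bnd mulr_natl.
  apply: ler_sum => j _; rewrite mxE.
  rewrite (le_trans (ler_norm _)) // normrM normfV mulrC ler_pM //.
    exact: HCa.
  rewrite lef_pV2 ?posrE //; last first.
    by rewrite normr_gt0 -char_eval; apply: Hroot; case/andP: Ht.
  by rewrite -char_eval; apply: Hdl.
set N := (Num.trunc ((t0 - 1) * Bnd)).+1.
have N0 : 0 < N%:R :> R by rewrite ltr0n.
set h := (t0 - 1) / N%:R.
have hN : h * N%:R = t0 - 1 by rewrite /h mulfVK // gt_eqF.
have h0 : 0 <= h by rewrite /h divr_ge0 // ?ler0n //; lra.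
have hB : h * Bnd < 1.
  rewrite /h mulrAC ltr_pdivrMr // mul1r.
  exact: truncnS_gt.
have Hk : forall k, (k <= N)%N -> Qp K (t0 - k%:R * h).
  elim=> [|k IH] Hk; first by rewrite mul0r subr0.
  have Hk' : (k <= N)%N by apply: ltnW.
  have kh : k%:R * h <= t0 - 1.
    by rewrite -hN mulrC ler_wpM2l // ler_nat.
  have Ht : 1 <= t0 - k%:R * h <= t0.
    apply/andP; split; first by lra.
    by rewrite lerBlDr lerDl mulr_ge0.
  have -> : t0 - k.+1%:R * h = (t0 - k%:R * h) - h.
    by rewrite -addn1 natrD mulrDl mul1r; lra.
  apply: Q_step => //; first by apply: (IH Hk').
    exact: unitt.
  move=> i; apply: le_lt_trans hB; rewrite ler_wpM2l //; exact: rowB.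
have := Hk N (leqnn N); rewrite mulrC hN.
by have -> : t0 - (t0 - 1) = 1 by lra.
Qed.
Lemma LA_zero n (K : 'M[R]_n) (v : 'cV[R]_n) : (forall i j, 0 <= K i j) ->
  (forall i, 0 <= v i 0) -> (forall i, v i 0 <= (K *m v) i 0) ->
  (forall t, 1 <= t -> ~~ root (char_poly K) t) -> forall i, v i 0 = 0.
Proof.
move=> K0 v0 Kv Hr i.
have Q1 := @LA_key n K K0 Hr.
have H : forall k, 0 <= ((1%:M - K) *m - v) k 0.
  by move=> k; rewrite tK_E mulmxN !mxE mul1r; have := Kv k; rewrite mxE; lra.
have := Q1 (- v) H i; rewrite mxE; have := v0 i; lra.
Qed.

Lemma Re_norm_ge0 (l : R[i]) : 0 <= complex.Re `|l|.
Proof. by rewrite normc_def /= sqrtr_ge0. Qed.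

Lemma spec_ge n (K : 'M[R]_n) t : 0 <= t -> root (char_poly K) t ->
  t <= spectral_radius K.
Proof.
move=> t0 rt; rewrite /spectral_radius.
set S := [set _ | _ in _].
have eig : forall l, eigenvalue (map_mx (real_complex R) K) l ->
    root (char_poly (map_mx (real_complex R) K)) l.
  by move=> l; rewrite eigenvalue_root_char.
have tS : S t.
  exists (t%:C)%C.
    by rewrite /= eigenvalue_root_char -map_char_poly fmorph_root.
  by rewrite normc_def /= expr0n /= addr0 sqrtr_sqr ger0_norm.
apply: sup_upper_bound => //; split; first by exists t.
have [rs Hrs] := closed_field_poly_normal (char_poly (map_mx (real_complex R) K)).
exists (\sum_(r <- rs) complex.Re `|r|) => _ [l /eig Hl <-].
move: Hl; rewrite Hrs (monicP (char_poly_monic _)) scale1r root_prod_XsubC.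
elim: rs {Hrs} => // r rs IH; rewrite in_cons big_cons => /orP[/eqP ->|/IH H].
  by rewrite lerDl sumr_ge0 // => x _; apply: Re_norm_ge0.
by rewrite (le_trans H) // lerDr Re_norm_ge0.
Qed.
End LA.


Section AN.
Variable R : realType.
Variable Z : finType.

Lemma up_cont (u : R -> Z -> R) z c : Assumption1 u -> 0 < c ->
  {for c, continuous (fun x => up u x z)}.
Proof.
move=> A c0; have [Hd _] := A z; have [_ dup] := Hd c c0.
by apply: differentiable_continuous; apply/derivable1_diffP.
Qed.

Lemma up_decr (u : R -> Z -> R) z a b : Assumption1 u -> 0 < a -> a < b ->
  up u b z < up u a z.
Proof.
move=> A a0 ab; have [Hd [_ [Hpp _]]] := A z.
set f := fun x => up u x z.
have H1 : forall x, x \in `]a, b[ -> is_derive x 1 f ('D_1 f x).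
  move=> x; rewrite in_itv /= => /andP[ax _]; apply: derivableP.
  by apply: (Hd x _).2; lra.
have H2 : {within `[a, b], continuous f}.
  apply: derivable_within_continuous => x; rewrite in_itv /= => /andP[ax _].
  by apply: (Hd x _).2; lra.
have [c Hc E] := MVT ab H1 H2.
move: Hc; rewrite in_itv /= => /andP[ac cb].
have : 'D_1 f c < 0 by rewrite -derive1E; apply: Hpp; lra.
rewrite -/f; move: E; rewrite /f => E.
have : 0 < b - a by lra.
by move=> ba Dn; rewrite -subr_lt0 E pmulr_llt0.
Qed.
Lemma pos_itv : [set a : R | 0 < a] = `]0, +oo[%classic.
Proof. by apply/seteqP; split => x; rewrite /= in_itv /= andbT. Qed.

Lemma H_meas (u : R -> Z -> R) (c : R -> Z -> R) zh :
  Assumption1 u -> inC u c ->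
  measurable_fun setT (fun a : R => if 0 < a then upE u (c a zh) zh else +oo%E).
Proof.
move=> A [Hc [_ [Hpos _]]].
apply: measurable_fun_if => //.
  by apply: measurable_fun_ltr => //; exact: measurable_cst.
- have -> : setT `&` ((fun a : R => 0 < a) @^-1` [set true]) = [set a : R | 0 < a].
    by apply/seteqP; split => x /=; [case|].
  apply: (eq_measurable_fun (EFin \o (fun a => up u (c a zh) zh))).
    move=> a; rewrite inE /= => a0; rewrite /upE.
    by have /andP[-> _] := Hpos zh a a0.
  apply/measurable_EFinP; apply: subspace_continuous_measurable_fun.
    by rewrite pos_itv; exact: measurable_itv.
  rewrite continuous_subspace_in => x; rewrite inE /= => x0.
  apply: continuous_comp; first exact: Hc.
  apply: up_cont => //; by have /andP[] := Hpos zh x x0.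
Qed.
Lemma up_le (u : R -> Z -> R) z a b : Assumption1 u -> 0 < a -> a <= b ->
  up u b z <= up u a z.
Proof.
move=> A a0; rewrite le_eqVlt => /orP[/eqP -> //|ab].
exact/ltW/up_decr.
Qed.

Lemma up_gt0 (u : R -> Z -> R) z a : Assumption1 u -> 0 < a -> 0 < up u a z.
Proof. by move=> A a0; have [_ [H _]] := A z; exact: H. Qed.

Definition Hfun (u : R -> Z -> R) (c : R -> Z -> R) zh (a : R) : \bar R :=
  if 0 < a then upE u (c a zh) zh else +oo%E.

Lemma Hfun_ge0 u c zh a : Assumption1 u -> inC u c -> (0 <= Hfun u c zh a)%E.
Proof.
move=> A [_ [_ [Hp _]]]; rewrite /Hfun /upE; case: ifP => // a0.
by have /andP[-> _] := Hp zh a a0; rewrite lee_fin ltW // up_gt0 //;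
  have /andP[] := Hp zh a a0.
Qed.

Variables (d : measure_display) (E : measurableType d).

Lemma G_meas u c (beta Rr Y : Z -> Z -> E -> R) z zh (w xi : R) :
  Assumption1 u -> inC u c -> nonneg_meas beta -> nonneg_meas Rr ->
  nonneg_meas Y ->
  measurable_fun setT (fun e => ((beta z zh e * Rr z zh e)%:E *
     Hfun u c zh (Rr z zh e * (w - xi) + Y z zh e))%E).
Proof.
move=> A Hc mb mR mY.
apply: emeasurable_funM.
  apply/measurable_EFinP; apply: measurable_funM; [exact: (mb z zh).1|exact: (mR z zh).1].
apply: measurableT_comp; first exact: H_meas.
apply: measurable_funD; last exact: (mY z zh).1.
by apply: measurable_funM; [exact: (mR z zh).1|exact: measurable_cst].
Qed.
Lemma pt_ineq u c1 c2 (b Rv Y1v Y2v : R) zh (w x1 x2 dd : R) :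
  Assumption1 u -> inC u c1 -> inC u c2 -> 0 <= b -> 0 <= Rv -> Y1v <= Y2v ->
  x2 <= x1 ->
  (forall a, 0 < a -> up u (c2 a zh) zh - up u (c1 a zh) zh <= dd) ->
  (b%:E * Hfun u c2 zh (Rv * (w - x2) + Y2v) <=
   b%:E * Hfun u c1 zh (Rv * (w - x1) + Y1v) + dd%:E * b%:E)%E.
Proof.
move=> A C1 C2 b0 R0 Y12 x12 Hdd.
have [_ [M1 [P1 _]]] := C1; have [_ [_ [P2 _]]] := C2.
have a12 : Rv * (w - x1) + Y1v <= Rv * (w - x2) + Y2v.
  by apply: lerD => //; apply: ler_wpM2l => //; lra.
move: b0; rewrite le_eqVlt => /orP[/eqP <-|b0].
  by rewrite !mul0e mule0 adde0.
set a1 := Rv * (w - x1) + Y1v in a12 *; set a2 := Rv * (w - x2) + Y2v in a12 *.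
rewrite /Hfun; case: (ltP 0 a1) => a10; last first.
  by rewrite gt0_muley ?lte_fin // addye ?leey.
have a20 : 0 < a2 by apply: lt_le_trans a12.
rewrite a20 /upE.
have /andP[c1p _] := P1 zh a1 a10; have /andP[c2p _] := P2 zh a2 a20.
rewrite c1p c2p -!EFinM -EFinD lee_fin.
have h1 : up u (c1 a2 zh) zh <= up u (c1 a1 zh) zh.
  by apply: up_le => //; apply: M1.
have h2 := Hdd a2 a20.
have h3 : up u (c2 a2 zh) zh <= up u (c1 a1 zh) zh + dd by lra.
have := h3; nra.
Qed.
Local Open Scope ereal_scope.
Lemma int_step (pi : probability E R) u c1 c2 (beta Rr Y1 Y2 : Z -> Z -> E -> R)
  z zh (w x1 x2 dd : R) :
  Assumption1 u -> inC u c1 -> inC u c2 -> nonneg_meas beta -> nonneg_meas Rr ->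
  nonneg_meas Y1 -> nonneg_meas Y2 -> (forall z zh e, (Y1 z zh e <= Y2 z zh e)%R) ->
  (x2 <= x1)%R -> (0 <= dd)%R ->
  (forall a, (0 < a)%R -> (up u (c2 a zh) zh - up u (c1 a zh) zh <= dd)%R) ->
  \int[pi]_e ((beta z zh e * Rr z zh e)%:E *
     Hfun u c2 zh (Rr z zh e * (w - x2) + Y2 z zh e)) <=
  \int[pi]_e ((beta z zh e * Rr z zh e)%:E *
     Hfun u c1 zh (Rr z zh e * (w - x1) + Y1 z zh e)) +
  dd%:E * \int[pi]_e (beta z zh e * Rr z zh e)%:E.
Proof.
move=> A C1 C2 mb mR mY1 mY2 Y12 x12 dd0 Hdd.
have b0 : forall e, (0 <= beta z zh e * Rr z zh e)%R.
  by move=> e; rewrite mulr_ge0 //; [exact: (mb z zh).2|exact: (mR z zh).2].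
have mbR : measurable_fun setT (fun e => (beta z zh e * Rr z zh e)%:E).
  apply/measurable_EFinP; apply: measurable_funM; [exact: (mb z zh).1|exact: (mR z zh).1].
rewrite -ge0_integralZl_EFin //; last by move=> e _; rewrite lee_fin.
rewrite -ge0_integralD //; first last.
- by apply: emeasurable_funM => //; exact: measurable_cst.
- by move=> e _; rewrite mule_ge0 // lee_fin.
- exact: G_meas.
- by move=> e _; rewrite mule_ge0 ?lee_fin // Hfun_ge0.
apply: ge0_le_integral => //.
- by move=> e _; rewrite mule_ge0 ?lee_fin // Hfun_ge0.
- exact: G_meas.
- apply: emeasurable_funD; first exact: G_meas.
  by apply: emeasurable_funM => //; exact: measurable_cst.
move=> e _; apply: pt_ineq => //.
- exact: (mR z zh).2.
Qed.
Lemma key_step (P : Z -> Z -> R) (pi : probability E R)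
  (beta Rr Y1 Y2 : Z -> Z -> E -> R) (u : R -> Z -> R) (c1 c2 : R -> Z -> R)
  (dd : Z -> R) (w : R) (z : Z) :
  stochastic P ->
  nonneg_meas beta -> nonneg_meas Rr -> nonneg_meas Y1 -> nonneg_meas Y2 ->
  (forall z zh e, (Y1 z zh e <= Y2 z zh e)%R) ->
  Assumption1 u ->
  (forall z zh, K1E P pi beta Rr z zh < +oo) ->
  optimal_consumption P pi beta Rr Y1 u c1 ->
  optimal_consumption P pi beta Rr Y2 u c2 ->
  (forall zh, (0 <= dd zh)%R) ->
  (forall a zh, (0 < a)%R -> (up u (c2 a zh) zh - up u (c1 a zh) zh <= dd zh)%R) ->
  (0 < w)%R ->
  (up u (c2 w z) z - up u (c1 w z) z <=
     \sum_(zh : Z) fine (K1E P pi beta Rr z zh) * dd zh)%R.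
Proof.
move=> [P0 _] mb mR mY1 mY2 Y12 A Kfin [C1 T1] [C2 T2] dd0 Hdd w0.
have K0 : forall zh, 0 <= K1E P pi beta Rr z zh.
  move=> zh; rewrite mule_ge0 ?lee_fin // integral_ge0 // => e _.
  by rewrite lee_fin mulr_ge0 //; [exact: (mb z zh).2|exact: (mR z zh).2].
have rhs0 : (0 <= \sum_(zh : Z) fine (K1E P pi beta Rr z zh) * dd zh)%R.
  by apply: sumr_ge0 => zh _; rewrite mulr_ge0 // fine_ge0.
set x1 := c1 w z; set x2 := c2 w z.
case: (lerP (up u x2 z - up u x1 z) 0) => [neg|pos]; first exact: le_trans rhs0.
have [/andP[x10 x1w] Eq1] := T1 w z w0.
have [/andP[x20 x2w] Eq2] := T2 w z w0.
have x21 : (x2 <= x1)%R.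
  rewrite leNgt; apply/negP => x12.
  have := @up_decr u z x1 x2 A x10 x12; rewrite -/x1 -/x2; lra.
have upw : (up u w z <= up u x1 z)%R by apply: up_le.
set G1f := fun zh e => (beta z zh e * Rr z zh e)%:E *
     Hfun u c1 zh (Rr z zh e * (w - x1) + Y1 z zh e).
set G2f := fun zh e => (beta z zh e * Rr z zh e)%:E *
     Hfun u c2 zh (Rr z zh e * (w - x2) + Y2 z zh e).
have E1le : Ez P pi z G1f <= (up u x1 z)%:E.
  by rewrite Eq1 le_max; apply/orP; left; exact: lexx.
have h2 : (up u w z)%:E <= Ez P pi z G2f.
  rewrite leNgt; apply/negP => h; move: Eq2; rewrite max_r; last exact: ltW.
  by case; lra.
have E2eq : Ez P pi z G2f = (up u x2 z)%:E.
  by rewrite Eq2 max_l //; exact: h2.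
have step : Ez P pi z G2f <=
    Ez P pi z G1f + (\sum_(zh : Z) fine (K1E P pi beta Rr z zh) * dd zh)%:E.
  rewrite /Ez -sumEFin -big_split /=; apply: lee_sum => zh _.
  have Kf : K1E P pi beta Rr z zh = (fine (K1E P pi beta Rr z zh))%:E.
    by rewrite fineK // ge0_fin_numE.
  have -> : (fine (K1E P pi beta Rr z zh) * dd zh)%:E =
      (P z zh)%:E * ((dd zh)%:E * \int[pi]_e (beta z zh e * Rr z zh e)%:E).
    by rewrite muleCA -[RHS]/((dd zh)%:E * K1E P pi beta Rr z zh) Kf -EFinM mulrC.
  rewrite -ge0_muleDr; first last.
  - by rewrite mule_ge0 ?lee_fin // integral_ge0 // => e _;
      rewrite lee_fin mulr_ge0 //; [exact: (mb z zh).2|exact: (mR z zh).2].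
  - by apply: integral_ge0 => e _; rewrite mule_ge0 ?lee_fin ?Hfun_ge0 //;
      rewrite mulr_ge0 //; [exact: (mb z zh).2|exact: (mR z zh).2].
  apply: lee_wpmul2l; first by rewrite lee_fin.
  by rewrite /G1f /G2f; apply: (@int_step pi u c1 c2 beta Rr Y1 Y2 z zh w x1 x2 (dd zh)) => // a; apply: Hdd.
have := le_trans step (leeD2r _ E1le); rewrite E2eq -EFinD lee_fin.
lra.
Qed.
End AN.

Theorem proposition2p3 (R : realType) (Z : finType) (d : measure_display)
  (E : measurableType d) (P : Z -> Z -> R) (pi : probability E R)
  (beta Rr Y1 Y2 : Z -> Z -> E -> R) (u : R -> Z -> R)
  (c1 c2 : R -> Z -> R) :
  stochastic P ->
  nonneg_meas beta -> nonneg_meas Rr -> nonneg_meas Y1 -> nonneg_meas Y2 ->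
  (forall z zh e, Y1 z zh e <= Y2 z zh e) ->
  Assumption1 u ->
  Assumption2 P pi beta Rr Y1 u ->
  Assumption2 P pi beta Rr Y2 u ->
  optimal_consumption P pi beta Rr Y1 u c1 ->
  optimal_consumption P pi beta Rr Y2 u c2 ->
  forall (w : R) (z : Z), 0 < w -> c1 w z <= c2 w z.
Proof.
move=> sP mb mR mY1 mY2 Y12 A [_ [_ [Kfin rho1]]] _ O1 O2 w z w0.
have O1' := O1; have O2' := O2.
move: O1' O2' => [[_ [_ [Pos1 [M1 HM1]]]] _] [[_ [_ [Pos2 [M2 HM2]]]] _].
set Dv := fun a zh => up u (c2 a zh) zh - up u (c1 a zh) zh.
set S := fun zh => [set Num.max 0 (Dv a zh) | a in [set a : R | 0 < a]].
set dd := fun zh => sup (S zh).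
have M0 : 0 <= M1 + M2.
  have h1 := HM1 z 1 ltr01; have h2 := HM2 z 1 ltr01.
  by apply: addr_ge0; [exact: le_trans h1|exact: le_trans h2].
have Sub : forall zh, ubound (S zh) (M1 + M2).
  move=> zh _ [a a0 <-]; rewrite ge_max M0 /= /Dv.
  have h1 := HM1 zh a a0; have h2 := HM2 zh a a0.
  move: h1 h2; rewrite !ler_norml; lra.
have Sne : forall zh, S zh !=set0.
  by move=> zh; exists (Num.max 0 (Dv 1 zh)); exists 1 => //=; exact: ltr01.
have Shs : forall zh, has_sup (S zh).
  by move=> zh; split; [exact: Sne | exists (M1 + M2); exact: Sub].
have dd0 : forall zh, 0 <= dd zh.
  move=> zh; apply: le_trans (sup_upper_bound (Shs zh) _); last first.
    by exists 1 => //=; exact: ltr01.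
  by rewrite le_max lexx.
have Hdd : forall a zh, 0 < a -> Dv a zh <= dd zh.
  move=> a zh a0; apply: le_trans (sup_upper_bound (Shs zh) _); last first.
    by exists a.
  by rewrite le_max lexx orbT.
have Hkey : forall z', dd z' <= \sum_(zh : Z) fine (K1E P pi beta Rr z' zh) * dd zh.
  move=> z'; apply: ge_sup => // _ [a a0 <-]; rewrite ge_max; apply/andP; split.
    by apply: sumr_ge0 => zh _; rewrite mulr_ge0 // fine_ge0 // mule_ge0 ?lee_fin
      ?(sP.1) // integral_ge0 // => e _; rewrite lee_fin mulr_ge0 //;
      [exact: (mb z' zh).2|exact: (mR z' zh).2].
  apply: (@key_step R Z d E P pi beta Rr Y1 Y2 u c1 c2 dd a z') => //.
set Km := K1 P pi beta Rr.
set v : 'cV[R]_#|Z| := \col_i dd (enum_val i).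
have Km0 : forall i j, 0 <= Km i j.
  move=> i j; rewrite mxE fine_ge0 // mule_ge0 ?lee_fin ?(sP.1) //.
  by apply: integral_ge0 => e _; rewrite lee_fin mulr_ge0 //;
    [exact: (mb _ _).2|exact: (mR _ _).2].
have v0 : forall i, 0 <= v i 0 by move=> i; rewrite mxE.
have Kv : forall i, v i 0 <= (Km *m v) i 0.
  move=> i; rewrite !mxE (le_trans (Hkey _)) //.
  rewrite (reindex _ (onW_bij _ (enum_val_bij Z))) /=.
  by apply: ler_sum => j _; rewrite !mxE.
have nroot : forall t, 1 <= t -> ~~ root (char_poly Km) t.
  move=> t t1; apply/negP => rt.
  have := @spec_ge R _ Km t (le_trans ler01 t1) rt; rewrite -/Km; lra.
have vz := @LA_zero R _ Km v Km0 v0 Kv nroot.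
have ddz : forall zh, dd zh = 0.
  by move=> zh; have := vz (enum_rank zh); rewrite mxE enum_rankK.
have := Hdd w z w0; rewrite ddz /Dv subr_le0 => H.
rewrite leNgt; apply/negP => c21.
have /andP[c2p _] := Pos2 z w w0.
have := @up_decr R Z u z (c2 w z) (c1 w z) A c2p c21; lra.
Qed.
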